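(* Let $(G,\mathcal{C})$ be a 2-colored graph, $G=(V,E)$, and $l,u:E\to\mathbb{N}$ with $l\le u$. Suppose $f\in\mathcal{A}(G,\mathcal{C})\cap\mathbb{N}^E$ is infeasible, but $\mathcal{A}(G,\mathcal{C})\cap\mathbb{N}^E$ contains a feasible vector. Then for each $e\in E$: (i) if $f(e)<l(e)$, then $G(f)$ has a CAT through $e_1$; (ii) if $f(e)>u(e)$, then $G(f)$ has a CAT through $e_3$.
   Context: Graphs are finite, undirected, may have parallel edges but no loops; $\mathcal{C}:E\to\{R,B\}$ is a red/blue coloring. The alternating cone $\mathcal{A}(G,\mathcal{C})\subseteq\mathbb{R}^E$ consists of $x\ge0$ with, at every vertex, the sum of $x$ over incident red edges equal to the sum over incident blue edges. A vector $f\in\mathcal{A}(G,\mathcal{C})$ is feasible if $l(e)\le f(e)\le u(e)$ for all $e$, infeasible otherwise. The residual 2-colored graph $G(f)=(V,E(f))$ of $f\in\mathcal{A}(G,\mathcal{C})\cap\mathbb{N}^E$ w.r.t. $l,u$: take four disjoint copies $e_1,e_2,e_3,e_4$ of each $e\in E$ (each with the same endpoints as $e$); $e_1\in E(f)$ with color $\mathcal{C}(e)$ iff $f(e)\le u(e)-1$; $e_2\in E(f)$ with color $\mathcal{C}(e)$ iff $f(e)\le u(e)-2$; $e_3\in E(f)$ with the color opposite to $\mathcal{C}(e)$ iff $f(e)\ge l(e)+1$; $e_4\in E(f)$ with the color opposite to $\mathcal{C}(e)$ iff $f(e)\ge l(e)+2$. A CAT (closed alternating trail) is a walk $(v_0,a_1,v_1,\dots,a_m,v_m)$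 with $v_0=v_m$, distinct edges $a_1,\dots,a_m$, consecutive edges of different colors, and $a_m$, $a_1$ of different colors; it is through an edge if that edge is among the $a_j$. *)

(* Defs.v *)
From mathcomp Require Import all_boot.
Set Implicit Arguments. Unset Strict Implicit. Unset Printing Implicit Defensive.

Section Defs.
Variables (V E : finType) (ends : E -> V * V) (col : E -> bool).
(* col e = true means e is red, false means blue. *)

Definition joins (p : V * V) (u v : V) : bool :=
  ((p.1 == u) && (p.2 == v)) || ((p.1 == v) && (p.2 == u)).

Definition incident (e : E) (v : V) : bool := (v == (ends e).1) || (v == (ends e).2).

Definition alternating (f : E -> nat) : Prop :=
  forall v : V, \sum_(e | incident e v && col e) f e
              = \sum_(e | incident e v && ~~ col e) f e.

Definition feasible (l u f : E -> nat) : Prop := forall e, l e <= f e <= u e.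
End Defs.

(* A CAT in a 2-colored multigraph with edge type F, endpoint map endsF,
   edge-presence predicate present and coloring colF: the walk
   (v0, a1, v1, ..., am, vm) is encoded as v0 and s = [:: (a1,v1); ...; (am,vm)]. *)
Definition is_CAT (V F : finType) (endsF : F -> V * V) (present : pred F)
    (colF : F -> bool) (v0 : V) (s : seq (F * V)) : bool :=
  if s is p1 :: _ then
    [&& last v0 (map snd s) == v0,
        uniq (map fst s),
        all (fun p => present p.1) s,
        all (fun q => joins (endsF q.2.1) q.1 q.2.2) (zip (v0 :: map snd s) s),
        sorted (fun a b => colF a != colF b) (map fst s) &
        colF (last p1.1 (map fst s)) != colF p1.1]
  else false.

(* Residual 2-colored graph G(f): edge (e, i) with i : 'I_4 is the copy e_{i+1}. *)
Section Residual.
Variables (V E : finType) (ends : E -> V * V) (col : E -> bool) (l u f : E -> nat).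

Definition res_ends (x : E * 'I_4) : V * V := ends x.1.

Definition res_present (x : E * 'I_4) : bool :=
  let e := x.1 in
  match val x.2 with
  | 0 => f e + 1 <= u e
  | 1 => f e + 2 <= u e
  | 2 => l e + 1 <= f e
  | _ => l e + 2 <= f e
  end.

Definition res_col (x : E * 'I_4) : bool :=
  if val x.2 < 2 then col x.1 else ~~ col x.1.

Definition res_CAT_through (x : E * 'I_4) : Prop :=
  exists (v0 : V) (s : seq ((E * 'I_4) * V)),
    is_CAT res_ends res_present res_col v0 s && (x \in map fst s).
End Residual.

(* Main.v *)
Require Import Defs.
From mathcomp Require Import all_boot.
From mathcomp Require Import zify.

Module Aux.
Set Implicit Arguments. Unset Strict Implicit. Unset Printing Implicit Defensive.

Lemma sum_eq1 (T : finType) (P : pred T) (b : T) :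
  \sum_(i | P i) ((b == i) : nat) = P b.
Proof.
case Pb: (P b).
  rewrite (bigD1 b) //= eqxx big1 // => i /andP[_]; rewrite eq_sym => /negPf -> //.
rewrite big1 // => i Pi; case: eqP => // Eb; by rewrite Eb Pi in Pb.
Qed.

Lemma sum_count_size (T : finType) (l : seq T) :
  \sum_(b : T) count_mem b l = size l.
Proof.
elim: l => [|a l IH]; first by rewrite big1.
rewrite /= -IH big_split /= (sum_eq1 predT a) /=; lia.
Qed.

Lemma two_occ (T : eqType) (z : T) (s : seq T) : 1 < count_mem z s ->
  exists P Q R, s = P ++ z :: Q ++ z :: R.
Proof.
elim: s => [|h s IH] //=.
case: eqP => [->|_] /=.
  rewrite add1n ltnS -has_count has_pred1 => /splitPr [Q R].
  by exists [::], Q, R.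
rewrite add0n => /IH [P [Q [R ->]]]; by exists (h :: P), Q, R.
Qed.

Ltac clear_lia := repeat (match goal with H : _ |- _ => clear H end); lia.

Section Trail.
Variables (V E : finType) (ends : E -> V * V) (cc : E -> bool) (m : E -> nat).
Hypothesis noloop : forall e, (ends e).1 != (ends e).2.

Fixpoint walk (v : V) (s : seq (E * V)) : bool :=
  if s is p :: s' then joins (ends p.1) v p.2 && walk p.2 s' else true.

Definition altc (a b : E) := cc a != cc b.

Definition valid (x : V) (s : seq (E * V)) :=
  [&& walk x s, sorted altc (map fst s) & [forall b, count_mem b (map fst s) <= m b]].

Definition closing (x : V) (s : seq (E * V)) :=
  if s is p :: _ then (last x (map snd s) == x) && (cc (last p.1 (map fst s)) != cc p.1)
  else false.

Definition good x s := valid x s && closing x s.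

Lemma walk_cat x s1 s2 : walk x (s1 ++ s2) = walk x s1 && walk (last x (map snd s1)) s2.
Proof. by elim: s1 x => [|p s1 IH] x //=; rewrite IH andbA. Qed.

Lemma walk_rcons x s p : walk x (rcons s p) = walk x s && joins (ends p.1) (last x (map snd s)) p.2.
Proof. by rewrite -cats1 walk_cat /= andbT. Qed.

Lemma joins_inc b v z : joins (ends b) v z -> forall w, incident ends b w = (w == v) || (w == z).
Proof.
rewrite /joins /incident => /orP[] /andP[/eqP -> /eqP ->] w //; by rewrite orbC.
Qed.

Lemma joins_neq b v z : joins (ends b) v z -> v != z.
Proof.
have := noloop b; rewrite /joins => nl /orP[] /andP[/eqP e1 /eqP e2]; rewrite -e1 -e2 //.
by rewrite eq_sym.
Qed.

Lemma joins_uniq b u u' w : joins (ends b) u w -> joins (ends b) u' w -> u = u'.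
Proof.
have := noloop b; rewrite /joins.
case: (ends b) => p1 p2 /= nl.
case/orP => /andP[/eqP e1 /eqP e2]; case/orP => /andP[/eqP e3 /eqP e4]; subst => //;
  by rewrite ?e4 ?e2 eqxx in nl.
Qed.

Lemma joins_end b v z : joins (ends b) v z -> (z == (ends b).1) || (z == (ends b).2).
Proof. by rewrite /joins => /orP[] /andP[/eqP h1 /eqP h2]; rewrite ?h1 -?h2 eqxx ?orbT. Qed.

Definition D (s : seq (E * V)) (w : V) (d : bool) := \sum_(b | incident ends b w && (cc b == d)) count_mem b (map fst s).

Lemma D_rcons s b z w d :
  D (rcons s (b, z)) w d = D s w d + (incident ends b w && (cc b == d)).
Proof.
rewrite /D map_rcons.
under eq_bigr => i _ do rewrite -cats1 count_cat /= addn0.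
by rewrite big_split /= sum_eq1.
Qed.

Lemma D_nil w d : D [::] w d = 0.
Proof. by rewrite /D big1. Qed.

Lemma inv x a y rest : walk x ((a, y) :: rest) -> sorted altc (a :: map fst rest) ->
  forall w d,
  D ((a, y) :: rest) w d + ((w == x) && (cc a != d))
     + ((w == last y (map snd rest)) && (cc (last a (map fst rest)) != d))
  = D ((a, y) :: rest) w (~~ d) + ((w == x) && (cc a == d))
     + ((w == last y (map snd rest)) && (cc (last a (map fst rest)) == d)).
Proof.
elim/last_ind: rest => [|rest [b z] IH].
  move=> /= /andP[hj _] _ w d.
  have := D_rcons [::] a y w d; have := D_rcons [::] a y w (~~ d).
  rewrite !D_nil /= => -> ->.
  rewrite (joins_inc hj); have := joins_neq hj.
  move=> nxy; case Ex: (w == x); case Ey: (w == y) => /=;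
  try (by move: nxy; rewrite -(eqP Ex) -(eqP Ey) eqxx);
  by case: (cc a); case: d.
rewrite -rcons_cons walk_rcons map_rcons /= rcons_path => /andP[hw hj] /andP[hs hb] w d.
have := IH hw hs w d.
rewrite -rcons_cons !D_rcons !map_rcons !last_rcons /=.
rewrite (joins_inc hj); have := joins_neq hj.
move: hb; rewrite /altc.
move: (D _ w d) (D _ w (~~ d)) => D1 D2 hb nxy.
clear IH hw hs hj.
move: hb nxy.
case: (w == x); case Ex: (w == z); case Ey: (w == last y [seq i.2 | i <- rest]) => /=;
  try (by move=> _; rewrite -(eqP Ex) -(eqP Ey) eqxx);
  case: (cc b); case: (cc (last a [seq i.1 | i <- rest])); case: d; case: (cc a) => //= _ _; lia.
Qed.


Hypothesis bal : forall w, \sum_(b | incident ends b w && cc b) m b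
                          = \sum_(b | incident ends b w && ~~ cc b) m b.

Lemma bal' w d : \sum_(b | incident ends b w && (cc b == d)) m b
               = \sum_(b | incident ends b w && (cc b == ~~ d)) m b.
Proof.
case: d.
  rewrite (eq_bigl (fun b => incident ends b w && cc b)); last by move=> b; case: (cc b).
  rewrite bal; apply: eq_bigl => b; by case: (cc b).
rewrite (eq_bigl (fun b => incident ends b w && ~~ cc b)); last by move=> b; case: (cc b).
rewrite -bal; apply: eq_bigl => b; by case: (cc b).
Qed.

Lemma ext x a y rest : valid x ((a, y) :: rest) -> ~~ closing x ((a, y) :: rest) ->
  exists p, valid x ((a, y) :: rcons rest p).
Proof.
set L := last y (map snd rest); set C := cc (last a (map fst rest)).
move=> hv hnc.
have [/existsP [b /and3P [Hinc Hcol Hlt]] | Hno] :=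
  boolP [exists b, [&& incident ends b L, cc b == ~~ C & count_mem b (map fst ((a, y) :: rest)) < m b]].
  pose z := if (ends b).1 == L then (ends b).2 else (ends b).1.
  have hj : joins (ends b) L z.
    rewrite /z /joins; case: eqP => [->|ne]; first by rewrite !eqxx.
    move: Hinc; rewrite /incident; case: eqP => [e|_] /=; first by rewrite e in ne.
    by move/eqP => ->; rewrite !eqxx.
  exists (b, z).
  move: hv; rewrite /valid -!rcons_cons walk_rcons map_rcons => /and3P [hw hs /forallP hc].
  apply/and3P; split.
  - by rewrite hw.
  - move: hs; rewrite /= rcons_path => ->; rewrite /altc (eqP Hcol) /= -/C; by case: (C).
  - apply/forallP => b'; have := hc b'; rewrite -cats1 !count_cat /=.
    move: Hlt => /=; case: (b =P b') => [<-|_] /= ; lia.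
exfalso.
move: hv => /and3P [hw hs /forallP hc].
have H1 : D ((a, y) :: rest) L C <= \sum_(b | incident ends b L && (cc b == C)) m b.
  by apply: leq_sum => b _; apply: hc.
have H2 : \sum_(b | incident ends b L && (cc b == ~~ C)) m b <= D ((a, y) :: rest) L (~~ C).
  apply: leq_sum => b /andP[hi hcb].
  move: Hno; rewrite negb_exists => /forallP /(_ b); rewrite hi hcb /= -leqNgt; done.
have H3 := bal' L C.
have := inv hw hs L C; rewrite -/L -/C (eqxx L) (eqxx C) /=.
move: hnc; rewrite /closing /= -/L -/C.
rewrite (eq_sym C); case: (L == x); case: (cc a == C) => /= ; lia.
Qed.


Lemma size_valid x s : valid x s -> size s <= \sum_b m b.
Proof.
case/and3P => _ _ /forallP hc.
rewrite -(size_map fst) -sum_count_size; apply: leq_sum => b _; exact: hc.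
Qed.

Lemma exists_good e0 : 0 < m e0 -> exists x s, good x s && (e0 \in map fst s).
Proof.
move=> hm.
set x := (ends e0).1; set y := (ends e0).2.
have grow : forall k, (exists x s, good x s && (e0 \in map fst s)) \/
   exists rest, valid x ((e0, y) :: rest) && (k <= size rest).
  elim=> [|k [IH|[rest /andP [hv hk]]]]; first (right; exists [::]).
  - rewrite andbT /valid /= /joins !eqxx /=; apply/forallP => b.
    by case: eqP => [<-|]. 
  - by left.
  case hc: (closing x ((e0, y) :: rest)).
    left; exists x, ((e0, y) :: rest); by rewrite /good hv hc mem_head.
  have [p hp] := ext hv (negbT hc).
  right; exists (rcons rest p); by rewrite hp size_rcons ltnS.
have [//|[rest /andP [hv hk]]] := grow (\sum_b m b).
have := size_valid hv; rewrite /=; lia.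
Qed.

Lemma split_good x s e0 b w : good x s -> e0 \in map fst s -> 1 < count_mem (b, w) s ->
  exists x' s', [&& good x' s', e0 \in map fst s' & size s' < size s].
Proof.
move=> hg he /two_occ [P [Q [R Es]]]; subst s.
move: hg; rewrite /good /valid => /andP [/and3P [hw hs /forallP hc] hcl].
move: hw; rewrite walk_cat /= walk_cat /= => /and5P [hwP hj1 hwQ hj2 hwR].
have Eu := joins_uniq hj1 hj2.
move: hs; rewrite map_cat /= map_cat /= sorted_cat_cons => /andP [hsP].
rewrite /= cat_path /= => /and3P [hbQ hQb hbR].
case: Q hwQ hbQ hQb hc he hcl Eu hj2 => [|q Q] hwQ hbQ hQb hc he hcl Eu hj2.
  by move: hQb; rewrite /= /altc eqxx.
move: hbQ; rewrite /= => /andP [hbq hqQ].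
have hcnt : forall c, count_mem c (map fst (P ++ (b, w) :: R)) <= m c /\
                      count_mem c (map fst (rcons (q :: Q) (b, w))) <= m c.
  move=> c; have := hc c; rewrite !map_cat /= !count_cat /= map_rcons -cats1 /= count_cat /= map_cat count_cat /=; move=> H; clear -H; lia.
have [he1 | he2] : (e0 \in map fst (P ++ (b, w) :: R)) \/ (e0 \in map fst (rcons (q :: Q) (b, w))).
- move: he; rewrite -cat1s -(cat1s (b, w) R) -cats1 !map_cat !mem_cat.
  case: (e0 \in map fst P); case: (e0 \in map fst (q :: Q)); case: (e0 \in map fst [:: (b, w)]);
    case: (e0 \in map fst R) => //=; auto.
- exists x, (P ++ (b, w) :: R); rewrite he1 /=.
  apply/andP; split; last by rewrite !size_cat /= size_cat /=; clear_lia.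
  apply/andP; split; last first.
    move: hcl; case: P hwP hsP hj1 Eu {hc hcnt he he1} => [|p P] hwP hsP hj1 Eu //=;
      rewrite /= ?map_cat /= ?last_cat /= ?map_cat /= ?last_cat /=; exact: id.
  apply/and3P; split.
  + by rewrite walk_cat /= hwP hj1 hwR.
  + by rewrite map_cat /= sorted_cat_cons hsP /= hbR.
  + apply/forallP => c; exact: (hcnt c).1.
- exists w, (rcons (q :: Q) (b, w)); rewrite he2 /=.
  apply/andP; split; last by rewrite size_rcons !size_cat /= size_cat /=; clear_lia.
  apply/andP; split.
    apply/and3P; split.
    + by rewrite walk_rcons; move: hwQ hj2 => /= /andP[-> ->] ->.
    + by rewrite map_rcons /= rcons_path hqQ.
    + apply/forallP => c; exact: (hcnt c).2.
  rewrite /= map_rcons !last_rcons eqxx /=.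
  by rewrite map_rcons last_rcons.
Qed.


Lemma descent e0 n x s : size s <= n -> good x s -> e0 \in map fst s ->
  exists x' s', [&& good x' s', e0 \in map fst s' &
                    [forall b, forall w, count_mem (b, w) s' <= 1]].
Proof.
elim: n x s => [|n IH] x s.
  by case: s.
move=> hsz hg he.
case hall: [forall b, forall w, count_mem (b, w) s <= 1].
  by exists x, s; rewrite hg he hall.
move/negbT: hall; rewrite negb_forall => /existsP [b]; rewrite negb_forall => /existsP [w].
rewrite -ltnNge => hc.
have [x' [s' /and3P [hg' he' hs']]] := split_good hg he hc.
apply: (IH x' s') => //; lia.
Qed.

End Trail.


Lemma walk_end (V E : finType) (ends : E -> V * V) v s p :
  walk ends v s -> p \in s -> (p.2 == (ends p.1).1) || (p.2 == (ends p.1).2).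
Proof.
elim: s v => [|q s IH] v //= /andP [hj hw]; rewrite inE => /orP [/eqP ->|hp].
  exact: joins_end hj.
exact: IH hw hp.
Qed.

Lemma two_count (T1 T2 : eqType) (s : seq (T1 * T2)) b w w' :
  (b, w) \in s -> (b, w') \in s -> w != w' -> 1 < count_mem b (map fst s).
Proof.
move=> h1 h2 hne.
rewrite count_map.
have H := count_predUI (pred1 (b, w)) (pred1 (b, w')) s.
have H0 : count (predI (pred1 (b, w)) (pred1 (b, w'))) s = 0.
  apply/eqP; rewrite -leqn0 leqNgt -has_count; apply/hasPn => p _ /=.
  apply/negP => /andP [/eqP -> /eqP [] /eqP]; by rewrite (negPf hne).
have H3 : count (predU (pred1 (b, w)) (pred1 (b, w'))) s <= count (preim fst (pred1 b)) s.
  apply: sub_count => p /= /orP [] /eqP -> //=.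
have c1 : 0 < count (pred1 (b, w)) s by rewrite -has_count has_pred1.
have c2 : 0 < count (pred1 (b, w')) s by rewrite -has_count has_pred1.
move: H H0 H3 c1 c2; move: (count _ s) (count _ s) (count _ s) (count _ s) (count _ s).
move=> ? ? ? ? ?; clear_lia.
Qed.

Lemma is_CAT_intro (V F : finType) (endsF : F -> V * V) (present : pred F)
    (colF : F -> bool) (v0 : V) (s : seq (F * V)) (d : F) :
  s != [::] -> last v0 (map snd s) == v0 -> uniq (map fst s) ->
  all (fun p => present p.1) s ->
  all (fun q => joins (endsF q.2.1) q.1 q.2.2) (zip (v0 :: map snd s) s) ->
  sorted (fun a b => colF a != colF b) (map fst s) ->
  colF (last d (map fst s)) != colF (head d (map fst s)) ->
  is_CAT endsF present colF v0 s.
Proof. by case: s => // p s _ /= -> -> -> -> -> ->. Qed.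

Lemma three_pt (V : eqType) (a c w w' d : V) : a != c -> (w == a) || (w == c) ->
  (w' == a) || (w' == c) -> (d == a) || (d == c) -> (w != d) = (w' != d) -> w = w'.
Proof.
move=> ac /orP [] /eqP -> /orP [] /eqP -> /orP [] /eqP -> //=; rewrite ?eqxx ?(negPf ac) //;
  by rewrite eq_sym (negPf ac).
Qed.

Lemma walk_zip (V E F : finType) (ends : E -> V * V) (endsF : F -> V * V)
  (phi : E * V -> F) (hphi : forall p, endsF (phi p) = ends p.1) v s :
  walk ends v s ->
  all (fun q => joins (endsF q.2.1) q.1 q.2.2)
      (zip (v :: map snd [seq (phi p, p.2) | p <- s]) [seq (phi p, p.2) | p <- s]).
Proof.
elim: s v => [|p t IH] v //= /andP [hj hw]; rewrite hphi hj /=; exact: IH.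
Qed.

Section Conv.
Variables (V E : finType) (ends : E -> V * V) (col : E -> bool).
Hypothesis noloop : forall e, (ends e).1 != (ends e).2.
Variables (l u f g : E -> nat).
Hypothesis hf : alternating ends col f.
Hypothesis hg : alternating ends col g.
Hypothesis hgf : feasible l u g.

Definition cc b := if f b < g b then col b else ~~ col b.
Definition mm b := (g b - f b) + (f b - g b).

Lemma balC w : \sum_(b | incident ends b w && cc b) mm b
             = \sum_(b | incident ends b w && ~~ cc b) mm b.
Proof.
have E1 : \sum_(b | incident ends b w) ((cc b * mm b) + (if col b then f b else g b))
        = \sum_(b | incident ends b w) ((~~ cc b * mm b) + (if col b then g b else f b)).
  apply: eq_bigr => b _; rewrite /cc /mm.
  case: (col b); case: (ltnP (f b) (g b)) => h /=; lia.
have Ef : \sum_(b | incident ends b w) (if col b then f b else g b)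
   = \sum_(b | incident ends b w && col b) f b + \sum_(b | incident ends b w && ~~ col b) g b.
  rewrite (bigID col) /=; congr (_ + _); apply: eq_bigr => b /andP[_ h];
    by rewrite ?h ?(negPf h).
have Eg : \sum_(b | incident ends b w) (if col b then g b else f b)
   = \sum_(b | incident ends b w && col b) g b + \sum_(b | incident ends b w && ~~ col b) f b.
  rewrite (bigID col) /=; congr (_ + _); apply: eq_bigr => b /andP[_ h];
    by rewrite ?h ?(negPf h).
rewrite !big_split /= Ef Eg hf hg in E1.
have L1 : \sum_(b | incident ends b w && cc b) mm b = \sum_(b | incident ends b w) (cc b * mm b).
  by rewrite big_mkcondr; apply: eq_bigr => b _; case: (cc b); rewrite ?mul1n ?mul0n.
have L2 : \sum_(b | incident ends b w && ~~ cc b) mm b = \sum_(b | incident ends b w) (~~ cc b * mm b).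
  by rewrite big_mkcondr; apply: eq_bigr => b _; case: (cc b); rewrite ?mul1n ?mul0n.
rewrite L1 L2.
move: E1; move: (\sum_(b | _) (cc b * mm b)) (\sum_(b | _) (~~ cc b * mm b)) => n1 n2.
clear; lia.
Qed.


Lemma convert x s e0 : good ends cc mm x s -> e0 \in map fst s ->
  [forall b, forall w, count_mem (b, w) s <= 1] ->
  res_CAT_through ends col l u f (e0, inord (2 * ~~ (f e0 < g e0))).
Proof.
move=> hgd he hu.
move: hgd; rewrite /good /valid => /andP [/and3P [hw hs /forallP hc] hcl].
pose dir b := (nth (b, (ends b).2) [seq p <- s | p.1 == b] 0).2.
have F2 : forall p, p \in s -> (p.1, dir p.1) \in s.
  move=> p hp.
  have hsz : 0 < size [seq q <- s | q.1 == p.1].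
    rewrite size_filter -has_count; apply/hasP; by exists p.
  have := mem_nth (p.1, (ends p.1).2) hsz; rewrite mem_filter => /andP [/eqP h1 h2].
  by rewrite /dir -{1}h1 -surjective_pairing.
pose lbl b w : 'I_4 := inord ((w != dir b) + 2 * ~~ (f b < g b)).
have F4 : forall b w, nat_of_ord (lbl b w) = (w != dir b) + 2 * ~~ (f b < g b).
  move=> b w; rewrite /lbl inordK //; by case: (w != dir b); case: (f b < g b).
pose psi (p : E * V) := (p.1, lbl p.1 p.2).
rewrite /res_CAT_through; exists x. exists (map (fun p : E * V => (psi p, p.2)) s).
have Ems : forall t, map snd [seq (psi p, p.2) | p <- t] = map snd t by move=> t; rewrite -map_comp.
have Emf : forall t, map fst [seq (psi p, p.2) | p <- t] = map psi t by move=> t; rewrite -map_comp.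
have Hcol : forall p, res_col col (psi p) = cc p.1.
  move=> p; rewrite /res_col /psi /= F4 /cc; by case: (p.2 != dir p.1); case: (f p.1 < g p.1).
apply/andP; split; last first.
  rewrite Emf; case/mapP: he => p hp he0.
  have := F2 p hp; rewrite -he0 => hd.
  apply/mapP; exists (e0, dir e0) => //; rewrite /psi /=; congr (_, _).
  apply: val_inj => /=; rewrite F4 eqxx inordK //; by case: (f e0 < g e0).
apply: (@is_CAT_intro _ _ _ _ _ _ _ (psi (e0, x))).
- by case: (s) hcl.
- by rewrite Ems; case: (s) hcl => //= p t /andP[].
- rewrite Emf map_inj_in_uniq.
    apply: count_mem_uniq => q.
    move: hu => /forallP/(_ q.1)/forallP/(_ q.2); rewrite -surjective_pairing => h1.
    case hq: (q \in s).
      by apply/eqP; rewrite eqn_leq h1 /= -has_count has_pred1.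
    by apply/count_memPn; rewrite hq.
  move=> [b w] [b' w'] hp hq [/= h1]; subst b' => h2.
  have := congr1 (@nat_of_ord 4) h2; rewrite !F4 => h3.
  have h4 : (w != dir b) = (w' != dir b).
    by move: h3; case: (w != dir b); case: (w' != dir b) => // h; move: h; clear_lia.
  congr (_, _); apply: (three_pt (noloop b) _ _ _ h4).
  + exact: (walk_end hw hp).
  + exact: (walk_end hw hq).
  + exact: (walk_end hw (F2 _ hp)).
- apply/allP => q /mapP [[b w] hp ->] /=.
  rewrite /res_present /psi /= F4.
  have c1 : 0 < count_mem b (map fst s) by rewrite -has_count has_pred1 (map_f fst hp).
  have c2 : (w != dir b) -> 1 < count_mem b (map fst s).
    move=> hne; exact: (two_count hp (F2 _ hp) hne).
  have c3 := hc b.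
  have c4 := hgf b.
  move: c1 c2 c3 c4; rewrite /mm.
  case: (w != dir b); case Hp: (f b < g b) => /=; move: Hp;
    move: (count_mem b _) => n; clear_lia.
- by apply: walk_zip.
- rewrite Emf sorted_map; move: hs; rewrite sorted_map.
  by rewrite (@eq_sorted _ _ (relpre fst (altc cc))) // => p q /=; rewrite !Hcol.
- rewrite Emf last_map Hcol.
  move: hcl; case: (s) => [|p t] //= /andP [_].
  by rewrite Hcol last_map.
Qed.

End Conv.

End Aux.
Import Aux.

Theorem theorem3p2 (V E : finType) (ends : E -> V * V) (col : E -> bool)
  (noloop : forall e : E, (ends e).1 != (ends e).2)
  (l u : E -> nat) (hlu : forall e : E, l e <= u e)
  (f : E -> nat) (hf : alternating ends col f)
  (hinf : ~ feasible l u f)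
  (hex : exists g : E -> nat, alternating ends col g /\ feasible l u g) :
  forall e : E,
    (f e < l e -> res_CAT_through ends col l u f (e, @Ordinal 4 0 isT)) /\
    (u e < f e -> res_CAT_through ends col l u f (e, @Ordinal 4 2 isT)).
Proof.
move=> e; have [g [hg hgf]] := hex.
have key : f e != g e -> res_CAT_through ends col l u f (e, inord (2 * ~~ (f e < g e))).
  move=> hne.
  have hm : 0 < mm f g e by rewrite /mm; move: hne; clear; lia.
  have [x [s /andP [hgd he]]] := exists_good noloop (balC hf hg) hm.
  have [x' [s' /and3P [hgd' he' hu']]] := descent noloop (leqnn (size s)) hgd he.
  have := convert noloop hgf hgd' he' hu'. exact (fun H => H).
have hle := hgf e.
split => h.
- have hlt : f e < g e by move: hle h; clear; lia.
  have := key (negbT (ltn_eqF hlt)).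
  by rewrite hlt /=; congr (res_CAT_through _ _ _ _ _ (_, _)); apply: val_inj; rewrite /= inordK.
- have hlt : g e < f e by move: hle h; clear; lia.
  have hne : f e != g e by rewrite eq_sym (ltn_eqF hlt).
  have := key hne.
  rewrite ltnNge (ltnW hlt) /=; congr (res_CAT_through _ _ _ _ _ (_, _)); by apply: val_inj; rewrite /= inordK.
Qed.
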